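(* Let $N\ge 1$ and let $\mathbf{g}\in\mathbb{C}^N$ be a window such that, for every $\ell=0,1,\dots,N-1$, the DFT of the length-$N$ sequence $m\mapsto \mathbf{g}[m]\,\overline{\mathbf{g}[(m-\ell)\bmod N]}$ is non-vanishing (all its entries are nonzero). Then for every $\mathbf{x}\in\mathbb{C}^N$, the LS Algorithm described in the context, applied to the noise-free STFT magnitude $\mathbf{Y}[m,k]=|\mathbf{X}[m,k]|^2$ of $\mathbf{x}$ (with $L=1$), outputs $\hat{\mathbf{x}}=e^{i\phi}\mathbf{x}$ for some $\phi\in\mathbb{R}$, i.e. it recovers $\mathbf{x}$ up to global phase.
   Context: Signals and windows are indexed by $\{0,\dots,N-1\}$ and extended $N$-periodically. The STFT of $\mathbf{x}\in\mathbb{C}^N$ with window $\mathbf{g}$ and step $L=1$ is $\mathbf{X}[m,k]=\sum_{n=0}^{N-1}\mathbf{x}[n]\mathbf{g}[m-n]e^{-2\pi i kn/N}$ for $m,k=0,\dots,N-1$. The DFT of $\mathbf{v}\in\mathbb{C}^N$ is $(\mathbf{F}\mathbf{v})[k]=\sum_n \mathbf{v}[n]e^{-2\pi i kn/N}$; $\mathbf{F}^*$ denotes its conjugate transpose. For a matrix $\mathbf{M}\in\mathbb{C}^{N\times N}$ and $\ell\in\{0,\dots,N-1\}$, $\mathrm{diag}(\mathbf{M},\ell)\in\mathbb{C}^N$ is the vector of entries $\mathbf{M}_{i,(i+\ell)\bmod N}$, $i=0,\dots,N-1$. LS Algorithm: given $\mathbf{Y}[m,k]$, (1) compute $\mathbf{Z}[m,\ell]=\sum_{k=0}^{N-1}\mathbf{Y}[m,k]e^{-2\pi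 i k\ell/N}$ and set $\mathbf{z}_\ell=(\mathbf{Z}[m,\ell])_{m=0}^{N-1}$; (2) for each $\ell=0,\dots,N-1$ compute $\mathbf{x}_\ell=\frac1N\mathbf{F}^*\mathbf{\Sigma}_\ell^{-1}\mathbf{F}\mathbf{z}_\ell$, where $\mathbf{\Sigma}_\ell$ is the diagonal matrix whose diagonal is $\mathbf{F}\big(\mathbf{g}[n]\overline{\mathbf{g}[(n-\ell)\bmod N]}\big)_{n=0}^{N-1}$ (with the normalization of $\mathbf{F}$ chosen so that $\mathbf{F}^*\mathbf{\Sigma}_\ell\mathbf{F}$ is the circulant matrix $\mathbf{G}_\ell$ with first column $(\mathbf{g}[m]\overline{\mathbf{g}[(m-\ell)\bmod N]})_m$, i.e. $\mathbf{x}_\ell=\frac1N\mathbf{G}_\ell^{-1}\mathbf{z}_\ell$); (3) form $\mathbf{X}\in\mathbb{C}^{N\times N}$ with $\mathrm{diag}(\mathbf{X},\ell)=\mathbf{x}_\ell$ for all $\ell$; (4) output $\hat{\mathbf{x}}=\sqrt{\lambda_{\max}}\,u_{\max}$, where $\lambda_{\max}$ is the largest eigenvalue of $\mathbf{X}$ and $u_{\max}$ an associated unit eigenvector. *)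

(* Defs.v *)
From HB Require Import structures.
From mathcomp Require Import all_boot all_order all_algebra.
From mathcomp Require Import complex.
From mathcomp Require Import reals trigo.
Set Implicit Arguments.
Unset Strict Implicit.
Unset Printing Implicit Defensive.
Import Order.TTheory GRing.Theory Num.Theory.
Local Open Scope ring_scope.
Local Open Scope complex_scope.

Section LS.
Variable R : realType.
(* Signals live in C^N with N = n.+1 >= 1, indexed by 'I_N = {0,...,N-1};
   'I_N carries the additive group Z/NZ, so (m - l) below is (m - l) mod N. *)
Variable n : nat.
Local Notation N := n.+1.
Local Notation C := (R[i]).
Local Notation vec := 'cV[C]_N.

Definition cexpN (a : nat) : C :=
  (cos (2 * pi * a%:R / N%:R)) -i* (sin (2 * pi * a%:R / N%:R)).

Definition cexpi (phi : R) : C := (cos phi) +i* (sin phi).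

Definition dft (v : 'I_N -> C) (k : 'I_N) : C :=
  \sum_(m < N) v m * cexpN (k * m).

Definition gprod (g : vec) (l : 'I_N) (m : 'I_N) : C :=
  g m 0 * (g (m - l) 0)^*.

(* STFT with step L = 1: X[m,k] = sum_n x[n] g[m-n] e^{-2 pi i k n / N} *)
Definition stft (g x : vec) : 'M[C]_N :=
  \matrix_(m < N, k < N) \sum_(j < N) x j 0 * g (m - j) 0 * cexpN (k * j).

Definition stft_mag (g x : vec) : 'M[C]_N :=
  \matrix_(m < N, k < N) `|stft g x m k| ^+ 2.

(* LS Algorithm, step (1): Z[m,l] = sum_k Y[m,k] e^{-2 pi i k l / N};
   z_l is the l-th column of Z *)
Definition ls_Z (Y : 'M[C]_N) : 'M[C]_N :=
  \matrix_(m < N, l < N) \sum_(k < N) Y m k * cexpN (k * l).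

Definition circG (g : vec) (l : 'I_N) : 'M[C]_N :=
  \matrix_(i < N, j < N) gprod g l (i - j).

Definition ls_xl (g : vec) (Y : 'M[C]_N) (l : 'I_N) : vec :=
  (N%:R)^-1 *: (invmx (circG g l) *m col l (ls_Z Y)).

(* step (3): the matrix with diag(X, l) = x_l, i.e. X[i, (i+l) mod N] = x_l[i] *)
Definition ls_X (g : vec) (Y : 'M[C]_N) : 'M[C]_N :=
  \matrix_(i < N, j < N) ls_xl g Y (j - i) i 0.

Definition is_eigenvalue (A : 'M[C]_N) (mu : C) : Prop :=
  exists v : vec, v != 0 /\ A *m v = mu *: v.

Definition unit_vec (u : vec) : Prop := \sum_(i < N) `|u i 0| ^+ 2 = 1.

End LS.

(* Main.v *)
Require Import Defs.
From HB Require Import structures.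
From mathcomp Require Import all_boot all_order all_algebra.
From mathcomp Require Import complex.
From mathcomp Require Import reals trigo.
From mathcomp Require Import ring lra zify.
Import Order.TTheory GRing.Theory Num.Theory.
Local Open Scope ring_scope.
Local Open Scope complex_scope.

Section S.
Variable R : realType.
Variable n : nat.
Local Notation N := n.+1.
Local Notation C := (R[i]).
Local Notation e := (cexpN R n).

Lemma cisD (t s : R) : (cos (t + s) -i* sin (t + s)) = (cos t -i* sin t) * (cos s -i* sin s).
Proof. rewrite cosD sinD. simpc. congr (_ +i* _); ring. Qed.

Lemma cexpND a b : e (a + b)%N = e a * e b.
Proof.
rewrite /cexpN -cisD; congr (cos _ -i* sin _); rewrite natrD; 
  generalize (2 * pi : R) => p; rewrite mulrDr mulrDl //.
Qed.

Lemma cexpN0 : e 0 = 1.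
Proof. rewrite /cexpN !mulr0 mul0r cos0 sin0 oppr0. by []. Qed.

Lemma cexpNN : e N = 1.
Proof.
rewrite /cexpN mulrK; last by rewrite unitfE pnatr_eq0.
rewrite mulr_natl cos2pi sin2pi oppr0. by [].
Qed.

Local Notation w := (e 1).

Lemma cexpNX a : e a = w ^+ a.
Proof. elim: a => [|a IH]; first by rewrite cexpN0 expr0. by rewrite -addn1 cexpND IH exprD expr1. Qed.

Lemma wN : w ^+ N = 1.
Proof. by rewrite -cexpNX cexpNN. Qed.

Lemma cexpN_mod a : e (a %% N) = e a.
Proof.
rewrite [in RHS](divn_eq a N) cexpND [e (_ * _)]cexpNX.
by rewrite mulnC exprM wN expr1n mul1r.
Qed.

Lemma cexpN_conj a : (e a)^* = e (n * a).
Proof.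
have h1 : e a * (e a)^* = 1.
  rewrite /cexpN; simpc; set t := (2 * pi * _ / _).
  by rewrite -!expr2 cos2Dsin2 (mulrC (cos t)) subrr.
have h2 : e (n * a) * e a = 1 by rewrite -cexpND -mulSnr cexpNX exprM wN expr1n.
by rewrite -[LHS]mul1r -h2 -mulrA h1 mulr1.
Qed.

Lemma cexpN_neq1 r : (0 < r < N)%N -> e r != 1.
Proof.
case/andP=> r0 rN; apply/negP => /eqP; rewrite /cexpN => -[] hc _.
pose y : R := pi * r%:R / N%:R.
have ht : 2 * pi * r%:R / N%:R = y *+ 2 by rewrite /y; move: (pi : R) (r%:R : R) (N%:R : R) => p a b; rewrite mulr2n; ring.
have hy : 0 < y < pi.
  have N0 : 0 < N%:R :> R by rewrite ltr0n.
  apply/andP; split.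
    by rewrite /y divr_gt0 // mulr_gt0 ?pi_gt0 // ltr0n.
  rewrite /y ltr_pdivrMr // ltr_pM2l ?pi_gt0 // ltr_nat //.
move: hc; rewrite ht cos_mulr2n cos2sin2 => hc.
have := sin_gt0_pi hy => hs.
have : 0 < sin y ^+ 2 by rewrite exprn_gt0.
move: hc; move: (sin y ^+ 2) => s hc hs2.
have : (1 - s) *+ 2 - 1 < 1 by rewrite mulr2n; lra.
by rewrite hc ltxx.
Qed.

Lemma orthoN d : \sum_(k < N) e (k * d) = if (N %| d)%N then N%:R else 0.
Proof.
have hk k : e (k * d) = (e d) ^+ k by rewrite [e (k * d)]cexpNX [e d]cexpNX mulnC exprM.
under eq_bigr do rewrite hk.
case: ifP => hd.
  rewrite -cexpN_mod (eqP hd) cexpN0.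
  by under eq_bigr do rewrite expr1n; rewrite sumr_const card_ord.
have hz : e d != 1.
  rewrite -cexpN_mod cexpN_neq1 // ltn_mod andbT lt0n.
  by rewrite -/(dvdn N d) hd.
have hzN : e d ^+ N = 1 by rewrite cexpNX -exprM mulnC exprM wN expr1n.
have h0 : (e d - 1) * \sum_(i < N) e d ^+ i = 0 by rewrite -subrX1 hzN subrr.
by move: h0 => /eqP; rewrite mulf_eq0 subr_eq0 (negbTE hz) /= => /eqP.
Qed.

Lemma eNinv x : e (n * x) * e x = 1.
Proof. by rewrite -cexpND -mulSnr cexpNX exprM wN expr1n. Qed.

Lemma e_mulmod k x : e (k * (x %% N)) = e (k * x).
Proof.
have h y : e (k * y) = e y ^+ k by rewrite [e (k * y)]cexpNX [e y]cexpNX mulnC exprM.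
by rewrite [e (k * (x %% N))]h [e (k * x)]h cexpN_mod.
Qed.

Lemma chiD k (a b : 'I_N) : e (k * (a + b)%R) = e (k * a) * e (k * b).
Proof.
have -> : nat_of_ord (a + b)%R = ((a + b) %% N)%N by [].
by rewrite e_mulmod mulnDr cexpND.
Qed.

Lemma chiB k (i t : 'I_N) : e (n * (k * (i - t)%R)) = e (n * (k * i)) * e (k * t).
Proof.
have -> : e (n * (k * i)) = e (n * (k * (i - t)%R)) * e (n * (k * t)).
  by rewrite !mulnA -chiD subrK.
by rewrite -mulrA eNinv mulr1.
Qed.

Lemma dvd_eq (j j' : 'I_N) : (N %| n * j + j')%N = (j == j').
Proof.
apply/idP/eqP.
  move=> hd.
  have h1 : (n * j + j' + j = j * N + j')%N by rewrite mulnS (mulnC j n); lia.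
  have h2 : ((n * j + j' + j) %% N = j)%N.
    by rewrite -modnDml (eqP hd) add0n modn_small.
  move: h2; rewrite h1 modnMDl modn_small // => h; apply/val_inj; by rewrite /= h.
move=> ->; rewrite -mulSnr; exact: dvdn_mulr.
Qed.

Section Circ.
Variable c : 'I_N -> C.
Definition circ : 'M[C]_N := \matrix_(i, j) c (i - j).
Definition Vm : 'M[C]_N := \matrix_(j, k) e (n * (k * j)).
Definition Vp : 'M[C]_N := \matrix_(k, j) e (k * j).

Lemma circV : circ *m Vm = Vm *m diag_mx (\row_k dft c k).
Proof.
apply/matrixP => i k; rewrite mul_mx_diag !mxE /dft big_distrr /=.
rewrite (reindex_inj (subrI i)) /=.
apply: eq_bigr => t _; rewrite !mxE subKr chiB.
by rewrite mulrCA (mulnC k t).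
Qed.

Lemma VVp : Vm *m Vp = (N%:R : C)%:M.
Proof.
apply/matrixP => j j'; rewrite !mxE.
have -> : \sum_k Vm j k * Vp k j' = \sum_(k < N) e (k * (n * j + j')).
  apply: eq_bigr => k _; rewrite !mxE -cexpND; congr (e _).
  by rewrite mulnDr mulnCA.
by rewrite orthoN dvd_eq; case: (j == j').
Qed.
End Circ.

Lemma circ_unit (c : 'I_N -> C) : (forall k, dft c k != 0) -> circ c \in unitmx.
Proof.
move=> hc.
set Di := diag_mx (\row_k (dft c k)^-1).
have hD : diag_mx (\row_k dft c k) *m Di = 1%:M.
  rewrite /Di mulmx_diag -diag_const_mx; congr diag_mx.
  by apply/rowP => j; rewrite !mxE mulfV.
have h : circ c *m ((N%:R : C)^-1 *: (Vm *m Di *m Vp)) = 1%:M.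
  rewrite -scalemxAr !mulmxA circV -(mulmxA Vm) hD mulmx1 VVp.
  by rewrite scale_scalar_mx mulVf // pnatr_eq0.
by case: (mulmx1_unit h).
Qed.

Lemma conjcE (z : C) : z^* = z^*%R. Proof. by []. Qed.
Lemma cexpN_conjR a : (e a)^*%R = e (n * a). Proof. exact: cexpN_conj. Qed.

Lemma dvd_eq2 (a b l : 'I_N) : (N %| a + n * b + l)%N = (b == a + l)%R.
Proof.
rewrite -dvd_eq.
have -> : nat_of_ord (a + l)%R = ((a + l) %% N)%N by [].
have -> : (a + n * b + l = n * b + (a + l))%N by lia.
by rewrite /dvdn modnDmr.
Qed.

Section Main.
Variables (g x : 'cV[C]_N).

Definition yl (l : 'I_N) : 'cV[C]_N := \col_a (x a 0 * (x (a + l) 0)^*%R).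

Lemma stft_mag_E (m k : 'I_N) : stft_mag g x m k =
  \sum_a \sum_b (x a 0 * g (m - a) 0 * ((x b 0)^*%R * (g (m - b) 0)^*%R))
     * e (k * (a + n * b)).
Proof.
rewrite !mxE normCK rmorph_sum mulr_suml; apply: eq_bigr => a _.
rewrite mulr_sumr; apply: eq_bigr => b _.
rewrite !rmorphM /= cexpN_conjR mulnDr mulnCA cexpND.
set A := x a 0 * _; set B := _ * (g (m - b) 0)^*%R.
by rewrite mulrACA.
Qed.

Lemma Zcol (l : 'I_N) : col l (ls_Z (stft_mag g x)) = N%:R *: (circG g l *m yl l).
Proof.
apply/matrixP => m z; rewrite !mxE.
under eq_bigr do rewrite stft_mag_E mulr_suml.
under eq_bigr do under eq_bigr do rewrite mulr_suml.
rewrite exchange_big /=; rewrite mulr_sumr; apply: eq_bigr => a _.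
rewrite exchange_big /=.
have -> : \sum_b \sum_(k < N) (x a 0 * g (m - a) 0 * ((x b 0)^*%R * (g (m - b) 0)^*%R) *
      e (k * (a + n * b)) * e (k * l)) =
   \sum_b (x a 0 * g (m - a) 0 * ((x b 0)^*%R * (g (m - b) 0)^*%R)) *
      (if b == (a + l)%R then N%:R else 0).
  apply: eq_bigr => b _; rewrite -dvd_eq2 -orthoN big_distrr /=.
  by apply: eq_bigr => k _; rewrite -mulrA -cexpND -mulnDr.
rewrite (bigD1 (a + l)%R) //= eqxx big1 ?addr0; last first.
  by move=> b /negbTE ->; rewrite mulr0.
rewrite /circG /yl !mxE /gprod. 
have -> : (m - (a + l) = m - a - l)%R by rewrite opprD addrA.
ring.
Qed.


Lemma xl_eq (l : 'I_N) : (forall k, dft (gprod g l) k != 0) ->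
  ls_xl g (stft_mag g x) l = yl l.
Proof.
move=> h; rewrite /ls_xl Zcol -scalemxAr (mulKmx (circ_unit _ h)).
by rewrite scalerA mulVf ?pnatr_eq0 // scale1r.
Qed.

Lemma X_eq : (forall l k, dft (gprod g l) k != 0) ->
  ls_X g (stft_mag g x) = \matrix_(i, j) (x i 0 * (x j 0)^*%R).
Proof.
move=> h; apply/matrixP => i j; rewrite /ls_X [LHS]mxE xl_eq // /yl !mxE.
have -> : (i + (j - i) = j)%R by rewrite addrC subrK.
by [].
Qed.

End Main.

Lemma unit_circle (z : R[i]) : z * z^*%R = 1 -> exists phi, cexpi phi = z.
Proof.
case: z => a b; rewrite -conjcE /=; simpc => /eqP; rewrite eq_complex /= => /andP[/eqP h _].
have ha : -1 <= a <= 1 by apply/andP; split; nra.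
have hs : sin (acos a) = `|b|.
  by rewrite sin_acos // -sqrtr_sqr; congr Num.sqrt; rewrite -h; ring.
have hc : cos (acos a) = a by rewrite acosK // in_itv /=.
case: (lerP 0 b) => hb.
  by exists (acos a); rewrite /cexpi hc hs ger0_norm.
by exists (- acos a); rewrite /cexpi cosN sinN hc hs ltr0_norm // opprK.
Qed.

Lemma Pmul (x v : 'cV[C]_N) : (\matrix_(i, j) (x i 0 * (x j 0)^*%R)) *m v =
  (\sum_j (x j 0)^*%R * v j 0) *: x.
Proof.
apply/matrixP => i z; rewrite !mxE big_distrl /= (ord1 z).
by apply: eq_bigr => j _; rewrite mxE -mulrA mulrC.
Qed.

Lemma nx_ge0 (x : 'cV[C]_N) (j : 'I_N) : 0 <= (x j 0)^*%R * x j 0.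
Proof. by rewrite mulrC mul_conjC_ge0. Qed.

Lemma nx_gt0 (x : 'cV[C]_N) : x != 0 -> 0 < \sum_j (x j 0)^*%R * x j 0.
Proof.
move=> hx; rewrite lt_def sumr_ge0 ?andbT; last by move=> j _; exact: nx_ge0.
apply/eqP => h0; move/eqP: hx; apply; apply/matrixP => j z; rewrite (ord1 z) mxE.
have := psumr_eq0P (fun j _ => nx_ge0 x j) h0 (i:=j) isT.
by move/eqP; rewrite mulf_eq0 conjC_eq0 orbb => /eqP.
Qed.

Lemma scal_cancel (a b : C) (v : 'cV[C]_N) : v != 0 -> a *: v = b *: v -> a = b.
Proof.
move=> hv h; apply/eqP; rewrite -subr_eq0.
have : (a - b) *: v == 0 by rewrite scalerBl h subrr.
by rewrite scaler_eq0 (negbTE hv) orbF.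
Qed.
End S.

Theorem theorem1 (R : realType) (n : nat) (g : 'cV[R[i]]_(n.+1))
  (hg : forall (l k : 'I_(n.+1)), dft (gprod g l) k != 0)
  (x : 'cV[R[i]]_(n.+1)) (lam : R[i]) (u : 'cV[R[i]]_(n.+1))
  (hu : unit_vec u)
  (heig : ls_X g (stft_mag g x) *m u = lam *: u)
  (hmax : forall mu : R[i], is_eigenvalue (ls_X g (stft_mag g x)) mu -> mu <= lam) :
  exists phi : R, sqrtC lam *: u = cexpi phi *: x.
Proof.
have hX := @X_eq R n g x hg.
rewrite hX in heig hmax.
rewrite Pmul in heig.
have hu' : \sum_j u j 0 * (u j 0)^*%R = 1.
  by rewrite -hu; apply: eq_bigr => j _; rewrite normCK.
have u0 : u != 0.
  apply/eqP => h0; move: hu'; rewrite h0.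
  under eq_bigr do rewrite mxE mul0r.
  by rewrite big1 // => /eqP; rewrite eq_sym oner_eq0.
have [hx0|hx] := eqVneq x 0.
  have hl : lam *: u = 0.
    rewrite -heig; apply/matrixP => i j; rewrite !mxE hx0 mxE mulr0. by [].
  move/eqP: hl; rewrite scaler_eq0 (negbTE u0) orbF => /eqP ->.
  exists 0; apply/matrixP => i j; rewrite !mxE sqrtC0 hx0 mxE mul0r mulr0. by [].
set s := \sum_j _ in heig.
set nx := \sum_j (x j 0)^*%R * x j 0.
have nx0 : 0 < nx by exact: (@nx_gt0 R n x hx).
have hle : nx <= lam.
  apply: hmax; exists x; split => //.
  by rewrite Pmul.
have lam0 : lam != 0 by rewrite gt_eqF // (lt_le_trans nx0 hle).
have hu2 : u = (s / lam) *: x.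
  by rewrite mulrC -scalerA heig scalerA mulVf // scale1r.
have s0 : s != 0.
  apply/eqP => s0; move/eqP: u0; apply; by rewrite hu2 s0 mul0r scale0r.
have hs : s = s / lam * nx.
  rewrite {1}/s hu2; under eq_bigr do rewrite mxE mulrCA.
  by rewrite -big_distrr.
have hlam : lam = nx.
  symmetry; apply: divr1_eq; apply: (mulfI s0).
  rewrite mulr1 [RHS]hs; ring.
set c := s / lam.
have hcu : c * c^*%R * nx = 1.
  rewrite -hu' hu2 /nx big_distrr /=; apply: eq_bigr => j _.
  rewrite /c !mxE !rmorphM /=; ring.
have hz : (sqrtC lam * c) * (sqrtC lam * c)^*%R = 1.
  rewrite rmorphM /= (conj_Creal (sqrtC_real (ltW (lt_le_trans nx0 hle)))).
  by rewrite mulrACA -expr2 sqrtCK hlam mulrC.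
have [phi hphi] := @unit_circle R _ hz.
exists phi; rewrite hphi hu2 scalerA. by [].
Qed.
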